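(* Consider the drive Hopfield neural network $$\dot{x}=-Cx+Wf(x)+I,\qquad x\in\mathbb{R}^3,$$ and the response Hopfield neural network $$\dot{y}=-\widetilde{C}y+\widetilde{W}f(y)+\lambda g(x(t)),\qquad y\in\mathbb{R}^3,$$ where $x(t)$ is an output (solution) of the drive network, under the standing assumptions listed in the context. Suppose that there is a constant $L>0$ such that $$\|g(x)-g(\overline{x})\|\ge L\|x-\overline{x}\|\quad\text{for all } x,\overline{x}\in\Lambda_x .$$ Then the response network admits sensitivity, i.e., there exist numbers $\widetilde{\epsilon}>0$ and $\widetilde{\Delta}>0$ such that for every $\widetilde{\delta}>0$, every $\alpha_1\in\Lambda_y$ and every chaotic output $x(t)$ of the drive network, there exist $\alpha_2\in\Lambda_y$, a chaotic output $\widetilde{x}(t)$ of the drive network, and an interval $\widetilde{J}\subset[0,\infty)$ of length at least $\widetilde{\Delta}$ such that $\|\alpha_1-\alpha_2\|<\widetilde{\delta}$ and $$\|\varphi_x(t,0,\alpha_1)-\varphi_{\widetilde{x}}(t,0,\alpha_2)\|>\widetilde{\epsilon}\quad\text{for all } t\in\widetilde{J}.$$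
   Context: Norms: Euclidean norm on vectors, spectral norm on $3\times 3$ matrices. For $u=(u_1,u_2,u_3)^T$, $f(u)=(\tanh u_1,\tanh u_2,\tanh u_3)^T$. In the drive network, $C=\mathrm{diag}(c_1,c_2,c_3)$ with $c_i>0$, $W$ is a real $3\times 3$ matrix and $I\in\mathbb{R}^3$. In the response network, $\widetilde{C}=\mathrm{diag}(\widetilde c_1,\widetilde c_2,\widetilde c_3)$ with $\widetilde c_i>0$, $\widetilde{W}$ is a real $3\times3$ matrix, $\lambda$ is a nonzero real constant, and $g=(g_1,g_2,g_3)^T:\mathbb{R}^3\to\mathbb{R}^3$ with each $g_i$ continuous. Standing assumptions: the drive network possesses a chaotic attractor $\mathcal{A}$, and $\Lambda_x\subset\mathbb{R}^3$ is a compact set, invariant under the flow of the drive network, containing $\mathcal{A}$. A solution $x(t)$ of the drive network is called a chaotic output if $x(0)\in\mathcal{A}$. The drive network is sensitive: there exist $\epsilon>0$ and $\Delta>0$ such that for every $\delta>0$ and every chaotic output $x(t)$ there exist a chaotic output $\widetilde{x}(t)$ and an interval $J\subset[0,\infty)$ of length at least $\Delta$ with $\|x(0)-\widetilde{x}(0)\|<\delta$ and $\|x(t)-\widetilde{x}(t)\|>\epsilon$ for all $t\in J$. There is a bounded set $\Lambda_y\subset\mathbb{R}^3$ which is invariant under the flow of the response network for every chaotic output $x(t)$ of the drive network. For an output $x(t)$ of the drive network, $\varphi_x(t,t_0,\alpha)$ denotes the solution of the response network (driven by $x(t)$) with $\varphi_x(t_0,t_0,\alpha)=\alpha$. *)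

(* Defs.v *)
From HB Require Import structures.
From mathcomp Require Import all_boot all_order all_algebra.
From mathcomp Require Import all_classical all_reals all_analysis.
Set Implicit Arguments. Unset Strict Implicit. Unset Printing Implicit Defensive.
Import Order.TTheory GRing.Theory Num.Theory.
Import numFieldNormedType.Exports.
Local Open Scope classical_set_scope.
Local Open Scope ring_scope.

Section Defs.
Variable R : realType.

Definition enorm (v : 'cV[R]_3) : R := Num.sqrt (\sum_(i < 3) (v i 0) ^+ 2).

Definition tanhR (u : R) : R := (expR u - expR (- u)) / (expR u + expR (- u)).

Definition factv (v : 'cV[R]_3) : 'cV[R]_3 := \col_i tanhR (v i 0).

Definition drive_sol (c : 'rV[R]_3) (W : 'M[R]_3) (I : 'cV[R]_3)
  (x : R -> 'cV[R]_3) : Prop :=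
  forall t : R, is_derive t 1 x (- (diag_mx c *m x t) + W *m factv (x t) + I).

Definition response_sol (ct : 'rV[R]_3) (Wt : 'M[R]_3) (lam : R)
  (g : 'cV[R]_3 -> 'cV[R]_3) (x : R -> 'cV[R]_3) (y : R -> 'cV[R]_3) : Prop :=
  forall t : R, is_derive t 1 y (- (diag_mx ct *m y t) + Wt *m factv (y t) + lam *: g (x t)).

Definition chaotic_output c W I (A : set 'cV[R]_3) (x : R -> 'cV[R]_3) : Prop :=
  drive_sol c W I x /\ A (x 0).

Definition is_interval (J : set R) : Prop :=
  forall s t u, J s -> J t -> s <= u -> u <= t -> J u.

(* the length (sup J - inf J, possibly infinite) of J is at least D *)
Definition length_ge (J : set R) (D : R) : Prop :=
  forall e, e < D -> exists s t, [/\ J s, J t & e < t - s].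

Definition good_interval (J : set R) (D : R) : Prop :=
  [/\ is_interval J, J `<=` [set t | 0 <= t] & length_ge J D].

End Defs.

(* Main.v *)
Set Warnings "-all".
Require Import Defs.
From HB Require Import structures.
From mathcomp Require Import all_boot all_order all_algebra.
From mathcomp Require Import all_classical all_reals all_analysis.
From mathcomp Require Import ring lra.
Import Order.TTheory GRing.Theory Num.Theory.
Import numFieldNormedType.Exports.
Local Open Scope classical_set_scope.
Local Open Scope ring_scope.

Section Helpers.
Context {R : realType}.

Lemma le_sum_abs n (F : 'I_n -> R) j : `|F j| <= \sum_k `|F k|.
Proof. by rewrite (bigD1 j) //= lerDl sumr_ge0. Qed.

Lemma sum_abs_ge0 n (F : 'I_n -> R) : 0 <= \sum_k `|F k|.
Proof. by rewrite sumr_ge0. Qed.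

Lemma comp_le_enorm (v : 'cV[R]_3) j : `|v j 0| <= enorm v.
Proof.
rewrite /enorm -sqrtr_sqr ler_sqrt; last by rewrite sumr_ge0 // => i _; rewrite sqr_ge0.
by rewrite (bigD1 j) //= lerDl sumr_ge0 // => i _; rewrite sqr_ge0.
Qed.

Lemma enorm_le3 (v : 'cV[R]_3) k : (forall j, `|v j 0| <= k) -> enorm v <= 3 * k.
Proof.
move=> H; have k0 : 0 <= k by apply: le_trans (H 0).
rewrite /enorm -(ger0_norm (_ : 0 <= 3 * k)); last by rewrite mulr_ge0.
rewrite -sqrtr_sqr ler_sqrt; last by rewrite sqr_ge0.
apply: (@le_trans _ _ (\sum_(i < 3) k ^+ 2)).
  apply: ler_sum => i _; have := H i; rewrite ler_norml => /andP[h1 h2]; nra.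
by rewrite sumr_const card_ord; nra.
Qed.

Lemma comp_le_norm (v : 'cV[R]_3) j : `|v j 0| <= `|v|.
Proof.
rewrite [leRHS]/Num.Def.normr/= mx_normrE.
by apply: le_trans (le_bigmax _ _ (j, 0)).
Qed.

Lemma norm_lt_comp (v : 'cV[R]_3) d : 0 < d -> (forall j, `|v j 0| < d) -> `|v| < d.
Proof.
move=> d0 H; rewrite [ltLHS]/Num.Def.normr/= mx_normrE.
apply: bigmax_lt => // -[i j] _ /=; by rewrite (ord1 j).
Qed.


Lemma tanhE (u : R) : tanhR u = (expR (u + u) - 1) / (expR (u + u) + 1).
Proof.
rewrite /tanhR expRD expRN; have E0 := expR_gt0 u.
field; apply/andP; split; [|by rewrite gt_eqF].
rewrite gt_eqF // (lt_le_trans (ltr01)) //.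
Qed.

Lemma tanh_bound (u : R) : `|tanhR u| <= 1.
Proof.
rewrite tanhE; have P0 := expR_gt0 (u + u).
rewrite normrM normfV ler_pdivrMr; last by rewrite normr_gt0 gt_eqF //; lra.
rewrite mul1r (gtr0_norm (_ : 0 < _ + 1)); last lra.
rewrite ler_norml; apply/andP; split; lra.
Qed.

Lemma tanh_lip (a b : R) : `|tanhR a - tanhR b| <= 4 * `|a - b|.
Proof.
rewrite !tanhE; set P := expR (a + a); set Q := expR (b + b).
have P0 : 0 < P by apply: expR_gt0.
have Q0 : 0 < Q by apply: expR_gt0.
have H1 : P * (1 + ((b + b) - (a + a))) <= Q.
  have -> : Q = P * expR ((b + b) - (a + a)) by rewrite /P /Q -expRD; congr expR; ring.
  by rewrite ler_pM2l // expR_ge1Dx.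
have H2 : Q * (1 + ((a + a) - (b + b))) <= P.
  have -> : P = Q * expR ((a + a) - (b + b)) by rewrite /P /Q -expRD; congr expR; ring.
  by rewrite ler_pM2l // expR_ge1Dx.
have -> : (P - 1) / (P + 1) - (Q - 1) / (Q + 1) = (2 * (P - Q)) / ((P + 1) * (Q + 1)).
  field; apply/andP; split; rewrite gt_eqF //; lra.
have D0 : 0 < (P + 1) * (Q + 1) by rewrite mulr_gt0 //; lra.
rewrite normrM normfV (gtr0_norm D0) ler_pdivrMr //.
have ab := ler_norm (a - b); have ba : b - a <= `|a - b| by rewrite distrC ler_norm.
set D := (P + 1) * (Q + 1).
have n0 : 0 <= `|a - b| by [].
have PD : P <= D by rewrite /D; nra.
have QD : Q <= D by rewrite /D; nra.
have h1 : P * (a - b) <= P * `|a - b| by rewrite ler_pM2l.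
have h2 : Q * (b - a) <= Q * `|a - b| by rewrite ler_pM2l.
have h3 : `|a - b| * P <= `|a - b| * D by rewrite ler_wpM2l.
have h4 : `|a - b| * Q <= `|a - b| * D by rewrite ler_wpM2l.
rewrite ler_norml; apply/andP; split; nra.
Qed.


Lemma comp_derive (x : R -> 'cV[R]_3) (t : R) (v : 'cV[R]_3) (i : 'I_3) :
  is_derive t 1 x v -> is_derive t 1 (fun s => x s i 0) (v i 0).
Proof.
move=> H; have d := @ex_derive _ _ _ _ _ _ _ H.
have di := (derivable_mxP _ _ _).1 d i 0.
apply: DeriveDef => //.
have := derive_mx d; rewrite (@derive_val _ _ _ _ _ _ _ H) => ->.
by rewrite mxE.
Qed.

Lemma MVT_all (f df : R -> R) (a b : R) : a <= b ->
  (forall t : R, is_derive t 1 f (df t)) ->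
  exists2 c, a <= c <= b & f b - f a = df c * (b - a).
Proof.
move=> ab H.
have cf : {within `[a, b], continuous f}.
  apply: continuous_subspaceT => t.
  apply/differentiable_continuous/derivable1_diffP.
  exact: (@ex_derive _ _ _ _ _ _ _ (H t)).
have [c cab E] := @MVT_segment R f df a b ab (fun t _ => H t) cf.
by exists c => //; move: cab; rewrite in_itv.
Qed.

Lemma resp_comp (ct : 'rV[R]_3) (Wt : 'M[R]_3) lam (y gx : 'cV[R]_3) k :
  (- (diag_mx ct *m y) + Wt *m factv y + lam *: gx) k 0 =
  - (ct 0 k * y k 0) + \sum_j Wt k j * tanhR (y j 0) + lam * gx k 0.
Proof.
rewrite mul_diag_mx !mxE; congr (_ + _ + _).
by apply: eq_bigr => j _; rewrite mxE.
Qed.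


Lemma unif_cont {K : set 'cV[R]_3} {h : 'cV[R]_3 -> R} : compact K -> continuous h ->
  forall e, 0 < e -> exists2 d, 0 < d &
    forall u v, K u -> K v -> `|u - v| < d -> `|h u - h v| < e.
Proof.
move=> cK ch e e0.
have Hc : \forall d \near (0:R)^'+, K `<=` (fun u => forall v, K v -> `|u - v| < d -> `|h u - h v| < e).
  apply: ((compact_near_coveringP K).1 cK R ((0:R)^'+)
   (fun d u => forall v, K v -> `|u - v| < d -> `|h u - h v| < e)).
  move=> x Kx.
  have e20 : 0 < e / 2 by rewrite divr_gt0.
  have Hn : \forall t \near x, `|h x - h t| < e / 2.
    by move: (ch x) => /cvgrPdist_lt; apply.
  have := (nbhs_ballP _ _).1 Hn; case=> r /= r0 Hr.
  near=> x' d => v Kv /= xv; rewrite /=.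
  have xx' : `|x - x'| < r / 2.
    near: x'; apply/nbhs_ballP; exists (r / 2) => /=; first by rewrite divr_gt0.
    by move=> w; rewrite -ball_normE.
  have dr : d < r / 2 by near: d; apply: nbhs_right_lt; rewrite divr_gt0.
  have h1 := Hr x' (_ : ball x r x').
  have h2 := Hr v (_ : ball x r v).
  have b1 : ball x r x' by rewrite -ball_normE /=; lra.
  have b2 : ball x r v.
    rewrite -ball_normE /=.
    have := ler_normD (x - x') (x' - v); rewrite addrA subrK. lra.
  have := h1 b1; have := h2 b2.
  have := ler_normD (h x' - h x) (h x - h v).
  rewrite [`|h x' - h x|]distrC.
  have -> : h x' - h x + (h x - h v) = h x' - h v by ring.
  lra.
near (0:R)^'+ => d.
exists d; first by near: d; exact: nbhs_right_gt.
move=> u v Ku Kv; move: u Ku v Kv.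
by near: d.
Unshelve. all: by end_near.
Qed.


Lemma compact_norm_bound {K : set 'cV[R]_3} : compact K ->
  exists B, 0 < B /\ forall v, K v -> `|v| <= B.
Proof.
move=> cK; case: (compact_bounded cK) => M [_ HM].
exists (`|M| + 1); split; first by rewrite ltr_wpDl.
move=> v Kv; apply: (HM (`|M| + 1)) => //.
by rewrite (le_lt_trans (ler_norm M)) // ltrDl.
Qed.

Lemma cont_bound {K : set 'cV[R]_3} {h : 'cV[R]_3 -> R} : compact K -> continuous h ->
  exists G, 0 < G /\ forall v, K v -> `|h v| <= G.
Proof.
move=> cK ch.
have cI : compact [set h x | x in K].
  by apply: continuous_compact => //; exact: continuous_subspaceT.
case: (compact_bounded cI) => M [_ HM].
exists (`|M| + 1); split; first by rewrite ltr_wpDl.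
move=> v Kv; apply: (HM (`|M| + 1)); last by exists v.
by rewrite (le_lt_trans (ler_norm M)) // ltrDl.
Qed.


Lemma le_sum_nonneg n (F : 'I_n -> R) j : (forall k, 0 <= F k) -> F j <= \sum_k F k.
Proof. by move=> H; rewrite (bigD1 j) //= lerDl sumr_ge0. Qed.

Lemma drive_comp (c : 'rV[R]_3) (W : 'M[R]_3) (I : 'cV[R]_3) (y : 'cV[R]_3) k :
  (- (diag_mx c *m y) + W *m factv y + I) k 0 =
  - (c 0 k * y k 0) + \sum_j W k j * tanhR (y j 0) + I k 0.
Proof.
rewrite mul_diag_mx !mxE; congr (_ + _ + _).
by apply: eq_bigr => j _; rewrite mxE.
Qed.

Lemma lin_comp_bound (cc : 'rV[R]_3) (WW : 'M[R]_3) (y : 'cV[R]_3) (ext B : R) k :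
  (forall j, `|y j 0| <= B) ->
  `|- (cc 0 k * y k 0) + \sum_j WW k j * tanhR (y j 0) + ext| <=
  (\sum_j `|cc 0 j|) * B + \sum_i \sum_j `|WW i j| + `|ext|.
Proof.
move=> H; have B0 : 0 <= B by apply: le_trans (H 0).
apply: le_trans (ler_normD _ _) _; rewrite lerD2r.
apply: le_trans (ler_normD _ _) _; apply: lerD.
  rewrite normrN normrM; apply: le_trans (_ : `|cc 0 k| * B <= _).
    by rewrite ler_wpM2l.
  by rewrite ler_wpM2r // le_sum_abs.
apply: le_trans (ler_norm_sum _ _ _) _.
apply: le_trans (_ : \sum_j `|WW k j| <= _).
  apply: ler_sum => j _; rewrite normrM -[leRHS]mulr1 ler_wpM2l //.
  exact: tanh_bound.
by rewrite [leRHS](bigD1 k) //= lerDl sumr_ge0 // => i _; rewrite sumr_ge0.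
Qed.

Lemma diff_comp_bound (cc : 'rV[R]_3) (WW : 'M[R]_3) (y1 y2 : 'cV[R]_3) (e : R) k :
  (forall j, `|y1 j 0 - y2 j 0| <= e) ->
  `|(- (cc 0 k * y1 k 0) + \sum_j WW k j * tanhR (y1 j 0)) -
    (- (cc 0 k * y2 k 0) + \sum_j WW k j * tanhR (y2 j 0))| <=
  ((\sum_j `|cc 0 j|) + 4 * \sum_i \sum_j `|WW i j|) * e.
Proof.
move=> H; have e0 : 0 <= e by apply: le_trans (H 0).
have -> : (- (cc 0 k * y1 k 0) + \sum_j WW k j * tanhR (y1 j 0)) -
    (- (cc 0 k * y2 k 0) + \sum_j WW k j * tanhR (y2 j 0)) =
    - (cc 0 k * (y1 k 0 - y2 k 0)) + \sum_j WW k j * (tanhR (y1 j 0) - tanhR (y2 j 0)).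
  rewrite [in RHS](eq_bigr (fun j => WW k j * tanhR (y1 j 0) - WW k j * tanhR (y2 j 0))).
    by rewrite sumrB; ring.
  by move=> j _; ring.
rewrite mulrDl; apply: le_trans (ler_normD _ _) _; apply: lerD.
  rewrite normrN normrM; apply: le_trans (_ : `|cc 0 k| * e <= _).
    by rewrite ler_wpM2l.
  by rewrite ler_wpM2r // le_sum_abs.
apply: le_trans (ler_norm_sum _ _ _) _.
apply: le_trans (_ : \sum_j `|WW k j| * (4 * e) <= _).
  apply: ler_sum => j _; rewrite normrM ler_wpM2l //.
  by apply: le_trans (tanh_lip _ _) _; rewrite ler_wpM2l.
have S : \sum_j `|WW k j| <= \sum_i \sum_j `|WW i j|.
  by rewrite [leRHS](bigD1 k) //= lerDl sumr_ge0 // => i _; rewrite sumr_ge0.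
rewrite -mulr_suml.
have -> : 4 * (\sum_i \sum_j `|WW i j|) * e = (\sum_i \sum_j `|WW i j|) * (4 * e) by ring.
by rewrite ler_wpM2r // mulr_ge0.
Qed.

Lemma enorm0 : enorm (0 : 'cV[R]_3) = 0.
Proof.
rewrite /enorm big1 ?sqrtr0 // => i _; by rewrite mxE expr0n.
Qed.


Lemma unif_cont3 {K : set 'cV[R]_3} {g : 'cV[R]_3 -> 'cV[R]_3} : compact K ->
  (forall i, continuous (fun v => g v i 0)) ->
  forall e, 0 < e -> exists2 d, 0 < d &
    forall u v, K u -> K v -> `|u - v| < d -> forall i, `|g u i 0 - g v i 0| < e.
Proof.
move=> cK gc e e0.
have /choice[df Hdf] : forall i : 'I_3, exists d, 0 < d /\
    forall u v, K u -> K v -> `|u - v| < d -> `|g u i 0 - g v i 0| < e.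
  move=> i; have [d d0 Hd] := @unif_cont K (fun v => g v i 0) cK (gc i) e e0.
  by exists d; split.
have S0 : 0 < \sum_i (df i)^-1.
  rewrite (bigD1 ord0) //= ltr_pwDl //; first by rewrite invr_gt0; case: (Hdf ord0).
  by rewrite sumr_ge0 // => i _; rewrite invr_ge0; case: (Hdf i) => /ltW.
exists (\sum_i (df i)^-1)^-1; first by rewrite invr_gt0.
move=> u v Ku Kv uv i; case: (Hdf i) => di Hi; apply: Hi => //.
apply: lt_le_trans uv _.
rewrite -[leRHS]invrK lef_pV2 ?posrE ?invr_gt0 //.
by apply: (@le_sum_nonneg 3 (fun j => (df j)^-1)) => j; rewrite invr_ge0; case: (Hdf j) => /ltW.
Qed.

Lemma cont_bound3 {K : set 'cV[R]_3} {g : 'cV[R]_3 -> 'cV[R]_3} : compact K ->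
  (forall i, continuous (fun v => g v i 0)) ->
  exists G, 0 < G /\ forall v, K v -> forall i, `|g v i 0| <= G.
Proof.
move=> cK gc.
have /choice[Gf HGf] : forall i : 'I_3, exists G, 0 < G /\ forall v, K v -> `|g v i 0| <= G.
  by move=> i; exact: (@cont_bound K (fun v => g v i 0) cK (gc i)).
exists (\sum_i Gf i); split.
  rewrite (bigD1 ord0) //= ltr_pwDl //; first by case: (HGf ord0).
  by rewrite sumr_ge0 // => i _; case: (HGf i) => /ltW.
move=> v Kv i; case: (HGf i) => _ H; apply: le_trans (H v Kv) _.
by apply: (@le_sum_nonneg 3 Gf) => j; case: (HGf j) => /ltW.
Qed.

End Helpers.
Theorem theorem2 (R : realType)
  (c : 'rV[R]_3) (W : 'M[R]_3) (I : 'cV[R]_3)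
  (ct : 'rV[R]_3) (Wt : 'M[R]_3) (lam : R) (g : 'cV[R]_3 -> 'cV[R]_3)
  (A Lx Ly : set 'cV[R]_3)
  (phi : (R -> 'cV[R]_3) -> R -> R -> 'cV[R]_3 -> 'cV[R]_3) :
  (* drive network parameters *)
  (forall i, 0 < c 0 i) ->
  (* response network parameters *)
  (forall i, 0 < ct 0 i) -> lam != 0 ->
  (forall i, continuous (fun v => g v i 0)) ->
  (* the chaotic attractor A: nonempty, invariant, contained in Lx *)
  A !=set0 ->
  (forall x, drive_sol c W I x -> A (x 0) -> forall t, 0 <= t -> A (x t)) ->
  A `<=` Lx ->
  (* Lx compact and invariant under the drive flow *)
  compact Lx ->
  (forall x, drive_sol c W I x -> Lx (x 0) -> forall t, 0 <= t -> Lx (x t)) ->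
  (* sensitivity of the drive network *)
  (exists eps Delta, [/\ 0 < eps, 0 < Delta &
     forall delta, 0 < delta -> forall x, chaotic_output c W I A x ->
       exists xt J, [/\ chaotic_output c W I A xt, good_interval J Delta,
         enorm (x 0 - xt 0) < delta &
         forall t, J t -> eps < enorm (x t - xt t)]]) ->
  (* phi_x(t, t0, alpha): the solution of the response network driven by x
     with phi_x(t0, t0, alpha) = alpha *)
  (forall x, chaotic_output c W I A x -> forall t0 alpha,
     phi x t0 t0 alpha = alpha /\
     response_sol ct Wt lam g x (fun t => phi x t t0 alpha)) ->
  (* Ly bounded and invariant under the response flow for every chaotic output *)
  (exists M, forall y, Ly y -> enorm y <= M) ->
  (forall x, chaotic_output c W I A x -> forall t0 alpha, Ly alpha ->
     forall t, t0 <= t -> Ly (phi x t t0 alpha)) ->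
  (* lower Lipschitz condition on g over Lx *)
  (exists L, 0 < L /\
     forall x xb, Lx x -> Lx xb -> L * enorm (x - xb) <= enorm (g x - g xb)) ->
  (* conclusion: sensitivity of the response network *)
  exists epst Deltat, [/\ 0 < epst, 0 < Deltat &
    forall deltat, 0 < deltat -> forall alpha1, Ly alpha1 ->
    forall x, chaotic_output c W I A x ->
      exists alpha2 xt J, [/\ Ly alpha2, chaotic_output c W I A xt,
        good_interval J Deltat, enorm (alpha1 - alpha2) < deltat &
        forall t, J t -> epst < enorm (phi x t 0 alpha1 - phi xt t 0 alpha2)]].
Proof.
move=> cpos ctpos lam0 gcont _ Ainv ALx cLx Lxinv [eps [Delta [eps0 Delta0 Hsens]]]
  Hphi [M HM] Lyinv [L [L0 HL]].
have [BX [BX0 HBX]] := compact_norm_bound cLx.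
have HBXc : forall v, Lx v -> forall j, `|v j 0| <= BX.
  by move=> v Lv j; apply: le_trans (comp_le_norm v j) (HBX v Lv).
have [G [G0 HG]] := cont_bound3 cLx gcont.
pose kap := L * eps / 3.
have kap0 : 0 < kap by rewrite /kap divr_gt0 // mulr_gt0.
have kap40 : 0 < kap / 4 by rewrite divr_gt0.
have [dl dl0 Hdl] := unif_cont3 cLx gcont (kap / 4) kap40.
pose SC := \sum_j `|c 0 j|.
pose SW := \sum_i \sum_j `|W i j|.
pose SI := \sum_j `|I j 0|.
have SC0 : 0 <= SC by rewrite /SC sumr_ge0.
have SW0 : 0 <= SW by rewrite /SW sumr_ge0 // => i _; rewrite sumr_ge0.
have SI0 : 0 <= SI by rewrite /SI sumr_ge0.
pose Bx := SC * BX + SW + SI + 1.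
have Bx0 : 0 < Bx by rewrite /Bx; have := mulr_ge0 SC0 (ltW BX0); lra.
have HBx : forall v, Lx v -> forall j,
    `|(- (diag_mx c *m v) + W *m factv v + I) j 0| <= Bx.
  move=> v Lv j; rewrite drive_comp.
  apply: le_trans (lin_comp_bound _ _ _ _ _ _ (HBXc v Lv)) _.
  have := @le_sum_abs _ 3 (fun j => I j 0) j; rewrite -/SC -/SW -/SI /Bx; lra.
pose h := dl / (2 * Bx).
have h0 : 0 < h by rewrite /h divr_gt0 // mulr_gt0.
have Bxh : Bx * h < dl.
  have -> : Bx * h = dl / 2 by rewrite /h; field; rewrite gt_eqF.
  lra.
pose SCt := \sum_j `|ct 0 j|.
pose SWt := \sum_i \sum_j `|Wt i j|.
have SCt0 : 0 <= SCt by rewrite /SCt sumr_ge0.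
have SWt0 : 0 <= SWt by rewrite /SWt sumr_ge0 // => i _; rewrite sumr_ge0.
pose CW := SCt + 4 * SWt + 1.
have CW0 : 0 < CW by rewrite /CW; lra.
pose lk := `|lam| * kap.
have lk0 : 0 < lk by rewrite /lk mulr_gt0 // normr_gt0.
pose e := Num.min (lk / (4 * CW)) (lk * h / 16).
have e0 : 0 < e.
  rewrite /e lt_min; apply/andP; split; apply: divr_gt0 => //; [lra | exact: mulr_gt0].
have eCW : CW * e <= lk / 4.
  have : e <= lk / (4 * CW) by rewrite /e ge_min lexx.
  rewrite ler_pdivlMr ?mulr_gt0 // => H; lra.
have eh : 8 * e < lk * h.
  have : e <= lk * h / 16 by rewrite /e ge_min lexx orbT.
  have := mulr_gt0 lk0 h0; lra.
pose BZ := 2 * (SCt * `|M| + SWt + `|lam| * G) + 1.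
have BZ0 : 0 < BZ.
  rewrite /BZ; have := mulr_ge0 SCt0 (normr_ge0 M).
  have := mulr_ge0 (normr_ge0 lam) (ltW G0); lra.
exists (e / 2), (e / (2 * BZ)); split; first by rewrite divr_gt0.
  by rewrite divr_gt0 // mulr_gt0.
move=> deltat dt0 a1 Ly1 x [dx Ax0].
have [xt [J [[dxt Axt0] [_ J0 lenJ] _ Hsep]]] := Hsens 1 ltr01 x (conj dx Ax0).
have [t0 [t' [Jt0 _ _]]] := lenJ 0 Delta0.
have t00 : 0 <= t0 := J0 _ Jt0.
have Lxx : forall t, 0 <= t -> Lx (x t) := Lxinv x dx (ALx _ Ax0).
have Lxxt : forall t, 0 <= t -> Lx (xt t) := Lxinv xt dxt (ALx _ Axt0).
have [_ Hr1] := Hphi x (conj dx Ax0) 0 a1.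
have [_ Hr2] := Hphi xt (conj dxt Axt0) 0 a1.
have Ly1t : forall t, 0 <= t -> Ly (phi x t 0 a1).
  by move=> t ht; exact: Lyinv x (conj dx Ax0) 0 a1 Ly1 t ht.
have Ly2t : forall t, 0 <= t -> Ly (phi xt t 0 a1).
  by move=> t ht; exact: Lyinv xt (conj dxt Axt0) 0 a1 Ly1 t ht.
pose dz := fun (k : 'I_3) (t : R) =>
  (- (diag_mx ct *m phi x t 0 a1) + Wt *m factv (phi x t 0 a1) + lam *: g (x t)) k 0 -
  (- (diag_mx ct *m phi xt t 0 a1) + Wt *m factv (phi xt t 0 a1) + lam *: g (xt t)) k 0.
have Dz : forall k (t : R), is_derive t 1
    (fun s => phi x s 0 a1 k 0 - phi xt s 0 a1 k 0) (dz k t).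
  move=> k t; have H := is_deriveB (comp_derive _ _ _ k (Hr1 t)) (comp_derive _ _ _ k (Hr2 t)); exact H.
have dzB : forall k t, 0 <= t -> `|dz k t| <= BZ.
  move=> k t ht; rewrite /dz !resp_comp.
  have b1 : forall j, `|phi x t 0 a1 j 0| <= `|M|.
    move=> j; apply: le_trans (comp_le_enorm _ j) _.
    exact: le_trans (HM _ (Ly1t t ht)) (ler_norm M).
  have b2 : forall j, `|phi xt t 0 a1 j 0| <= `|M|.
    move=> j; apply: le_trans (comp_le_enorm _ j) _.
    exact: le_trans (HM _ (Ly2t t ht)) (ler_norm M).
  have B1 := lin_comp_bound ct Wt _ (lam * g (x t) k 0) _ k b1.
  have B2 := lin_comp_bound ct Wt _ (lam * g (xt t) k 0) _ k b2.
  have g1 : `|lam * g (x t) k 0| <= `|lam| * G.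
    by rewrite normrM ler_wpM2l // HG //; exact: Lxx.
  have g2 : `|lam * g (xt t) k 0| <= `|lam| * G.
    by rewrite normrM ler_wpM2l // HG //; exact: Lxxt.
  apply: le_trans (ler_normB _ _) _.
  rewrite -/SCt -/SWt in B1 B2; rewrite /BZ; lra.
have gsep : 3 * kap < enorm (g (x t0) - g (xt t0)).
  have H1 := HL _ _ (Lxx _ t00) (Lxxt _ t00).
  have H2 := Hsep t0 Jt0.
  have -> : 3 * kap = L * eps by rewrite /kap; field.
  apply: lt_le_trans H1; by rewrite ltr_pM2l.
have [i Hi] : exists i, kap < `|g (x t0) i 0 - g (xt t0) i 0|.
  apply: contrapT => Hn.
  have : enorm (g (x t0) - g (xt t0)) <= 3 * kap.
    apply: enorm_le3 => j; rewrite !mxE leNgt; apply/negP => Hj; apply: Hn.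
    by exists j.
  lra.
have xclose : forall (xx : R -> 'cV[R]_3), drive_sol c W I xx ->
    (forall t, 0 <= t -> Lx (xx t)) -> forall t, t0 <= t <= t0 + h ->
    forall j, `|g (xx t) j 0 - g (xx t0) j 0| < kap / 4.
  move=> xx dxx Lxx2 t /andP[ht1 ht2] j.
  apply: Hdl; [apply: Lxx2; lra | apply: Lxx2; lra |].
  apply: norm_lt_comp => // m; rewrite !mxE.
  have [cc /andP[c1 c2] E] := MVT_all _ _ _ _ ht1 (fun s => comp_derive _ _ _ m (dxx s)).
  rewrite E normrM.
  have D1 := HBx _ (Lxx2 cc (le_trans t00 c1)) m.
  have D2 : `|t - t0| <= h by rewrite ger0_norm; lra.
  apply: le_lt_trans Bxh.
  apply: le_trans (_ : Bx * `|t - t0| <= _); last by rewrite ler_wpM2l // ltW.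
  by rewrite ler_wpM2r.
have [[k [t1 [/andP[t1a t1b] Hk]]] | Hn] :=
  pselect (exists k t, t0 <= t <= t0 + h /\ e < `|phi x t 0 a1 k 0 - phi xt t 0 a1 k 0|).
- have r0 : 0 < e / (2 * BZ) by rewrite divr_gt0 // mulr_gt0.
  exists a1, xt, [set t | t1 <= t <= t1 + e / (2 * BZ)]; split => //.
  + split.
    * by move=> s u w /= /andP[s1 s2] /andP[u1 u2] su uw; apply/andP; split; lra.
    * by move=> s /= /andP[s1 s2]; lra.
    * move=> e' He'; exists t1, (t1 + e / (2 * BZ)); split => /=.
      - by apply/andP; split; lra.
      - by apply/andP; split; lra.
      - lra.
  + by rewrite subrr enorm0.
  + move=> t /= /andP[ta tb].
    have [cc /andP[c1 c2] E] := MVT_all _ _ _ _ ta (Dz k).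
    have rB : BZ * (e / (2 * BZ)) = e / 2 by field; rewrite gt_eqF.
    have H1 : `|dz k cc * (t - t1)| <= e / 2.
      rewrite normrM; apply: le_trans (_ : BZ * (e / (2 * BZ)) <= _); last by rewrite rB.
      apply: le_trans (_ : BZ * `|t - t1| <= _).
        by rewrite ler_wpM2r // dzB //; lra.
      apply: ler_wpM2l; first exact: ltW.
      by rewrite ger0_norm; lra.
    rewrite -E in H1.
    apply: lt_le_trans (comp_le_enorm _ k); rewrite !mxE.
    have := lerB_normD (phi x t1 0 a1 k 0 - phi xt t1 0 a1 k 0)
      (phi x t 0 a1 k 0 - phi xt t 0 a1 k 0 - (phi x t1 0 a1 k 0 - phi xt t1 0 a1 k 0)).
    have -> : phi x t1 0 a1 k 0 - phi xt t1 0 a1 k 0 +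
      (phi x t 0 a1 k 0 - phi xt t 0 a1 k 0 - (phi x t1 0 a1 k 0 - phi xt t1 0 a1 k 0)) =
      phi x t 0 a1 k 0 - phi xt t 0 a1 k 0 by ring.
    lra.
- exfalso.
  have Hall : forall k t, t0 <= t <= t0 + h ->
      `|phi x t 0 a1 k 0 - phi xt t 0 a1 k 0| <= e.
    by move=> k t ht; rewrite leNgt; apply/negP => H; apply: Hn; exists k, t; split.
  have t0h : t0 <= t0 + h by lra.
  have [cc /andP[c1 c2] E] := MVT_all _ _ _ _ t0h (Dz i).
  have hc : t0 <= cc <= t0 + h by apply/andP.
  have Q := diff_comp_bound ct Wt (phi x cc 0 a1) (phi xt cc 0 a1) e i
    (fun j => Hall j cc hc).
  rewrite -/SCt -/SWt in Q.
  have gx := xclose x dx Lxx cc hc i.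
  have gxt := xclose xt dxt Lxxt cc hc i.
  move: E; rewrite /dz !resp_comp.
  set A1 := - (ct 0 i * phi x cc 0 a1 i 0) + _.
  set A2 := - (ct 0 i * phi xt cc 0 a1 i 0) + _.
  rewrite -/A1 -/A2 in Q.
  set b := g (x cc) i 0 - g (xt cc) i 0.
  set a := g (x t0) i 0 - g (xt t0) i 0.
  have ba : `|b - a| < kap / 2.
    have -> : b - a = (g (x cc) i 0 - g (x t0) i 0) - (g (xt cc) i 0 - g (xt t0) i 0)
      by rewrite /a /b; ring.
    apply: le_lt_trans (ler_normB _ _) _; lra.
  have bk : kap / 2 < `|b|.
    have E2 : a + (b - a) = b by ring.
    have := lerB_normD a (b - a); rewrite E2; lra.
  have Qe : `|A1 - A2| <= lk / 4.
    apply: le_trans Q _; apply: le_trans eCW; rewrite ler_wpM2r ?ltW // /CW; lra.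
  have -> : A1 + lam * g (x cc) i 0 - (A2 + lam * g (xt cc) i 0) = (A1 - A2) + lam * b
    by rewrite /b; ring.
  move=> E.
  have lb : lk / 2 <= `|lam * b|.
    rewrite normrM /lk.
    have -> : `|lam| * kap / 2 = `|lam| * (kap / 2) by ring.
    by rewrite ler_wpM2l // ltW.
  have dzl : lk / 4 <= `|A1 - A2 + lam * b|.
    have E3 : lam * b + (A1 - A2) = A1 - A2 + lam * b by ring.
    have := lerB_normD (lam * b) (A1 - A2); rewrite E3; lra.
  have zl : lk / 4 * h <= `|(A1 - A2 + lam * b) * (t0 + h - t0)|.
    have -> : t0 + h - t0 = h by ring.
    rewrite normrM (gtr0_norm h0); apply: ler_wpM2r; [exact: ltW | exact: dzl].
  rewrite -E /= in zl.
  have z1 := Hall i (t0 + h) (_ : t0 <= t0 + h <= t0 + h).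
  have z0 := Hall i t0 (_ : t0 <= t0 <= t0 + h).
  have := ler_normB (phi x (t0 + h) 0 a1 i 0 - phi xt (t0 + h) 0 a1 i 0)
    (phi x t0 0 a1 i 0 - phi xt t0 0 a1 i 0).
  have := z1 _; have := z0 _.
  have := mulr_gt0 lk0 h0.
  move=> ? ? ?; lra.
Qed.
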